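(* For $\gamma\in(0,1)$ and $\varphi(x)=x^{1-\gamma}$, \[ \alpha_\varphi=\frac{1}{e\,\Gamma(\gamma)}\int_0^1\frac{e^x}{(-\log x)^{1-\gamma}}\,dx. \]
   Context: $\alpha_\varphi=\inf_{x\in\mathbb{Z}_{\ge1}}\frac{\mathbb{E}_{X\sim\mathrm{Pois}(x)}[\varphi(X)]}{\varphi(x)}$; $\Gamma$ is the Gamma function and $\log$ is the natural logarithm. *)

(* Defs.v *)
From Stdlib Require Import Reals.
From Coquelicot Require Import Coquelicot.
Open Scope R_scope.

(* phi(x) = x^(1-gamma), with phi(0) = 0 (Rpower is only meaningful for x > 0). *)
Definition phi (g x : R) : R := if Rle_dec x 0 then 0 else Rpower x (1 - g).

Definition pois_expect (x : R) (f : R -> R) : R :=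
  Series (fun k : nat => exp (- x) * x ^ k / INR (Factorial.fact k) * f (INR k)).

Definition alpha (f : R -> R) : Rbar :=
  Glb_Rbar (fun r => exists n : nat, (1 <= n)%nat /\
                      r = pois_expect (INR n) f / f (INR n)).

Definition Gamma (s : R) : R :=
  RInt_gen (fun t => Rpower t (s - 1) * exp (- t)) (at_right 0) (Rbar_locally p_infty).

(* Main.v *)
Require Import Defs.
From Stdlib Require Import Reals Lra Lia Psatz Classical.
From Coquelicot Require Import Coquelicot.
Open Scope R_scope.

Lemma ln_le_sub1 z : 0 < z -> ln z <= z - 1.
Proof. intros Hz. generalize (exp_ineq1_le (ln z)). rewrite exp_ln; lra. Qed.

Lemma rp_lower z r : 0 < z -> r <= 0 -> 1 + r * (z - 1) <= Rpower z r.
Proof.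
  intros Hz Hr. unfold Rpower. generalize (exp_ineq1_le (r * ln z)).
  generalize (ln_le_sub1 z Hz). nra.
Qed.

Lemma rp_pos x y : 0 < Rpower x y.
Proof. unfold Rpower. apply exp_pos. Qed.

Lemma rp_upper t g : 0 < t -> 0 < g < 1 -> Rpower t g <= 1 + g * (t - 1).
Proof.
  intros Ht Hg.
  set (s := Rpower t g). set (z := Rpower t (1 - g)).
  assert (Hs : 0 < s) by apply rp_pos.
  assert (Hz : 0 < z) by apply rp_pos.
  assert (Htz : t = s * z).
  { unfold s, z. rewrite <- Rpower_plus. replace (g + (1 - g)) with 1 by ring.
    now rewrite Rpower_1. }
  assert (Hzr : Rpower z (- g / (1 - g)) = / s).
  { unfold z, s. rewrite Rpower_mult. replace ((1 - g) * (- g / (1 - g))) with (- g) by (field; lra).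
    apply Rpower_Ropp. }
  assert (H := rp_lower z (- g / (1 - g)) Hz).
  rewrite Hzr in H.
  assert (Hr : - g / (1 - g) <= 0).
  { unfold Rdiv. assert (0 < / (1 - g)) by (apply Rinv_0_lt_compat; lra). nra. }
  specialize (H Hr).
  assert (H2 : s * (1 - g) * (1 + - g / (1 - g) * (z - 1)) <= s * (1 - g) * / s).
  { apply Rmult_le_compat_l; [|exact H]. nra. }
  replace (s * (1 - g) * / s) with (1 - g) in H2 by (field; lra).
  replace (s * (1 - g) * (1 + - g / (1 - g) * (z - 1))) with (s - g * (s * z)) in H2 by (field; lra).
  rewrite Htz. lra.
Qed.

Lemma e_gt : (27/10) < exp 1.
Proof.
  generalize (exp_ge_taylor 1 4 ltac:(lra)). simpl. unfold Rdiv.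
  rewrite !Rmult_1_l. intros H.
  replace (INR (Factorial.fact 0)) with 1 in H by reflexivity.
  replace (INR (Factorial.fact 1)) with 1 in H by reflexivity.
  replace (INR (Factorial.fact 2)) with 2 in H by (simpl; lra).
  replace (INR (Factorial.fact 3)) with 6 in H by (simpl; lra).
  replace (INR (Factorial.fact 4)) with 24 in H by (simpl; lra).
  lra.
Qed.

Lemma expm1_bound : 0 < exp (-1) < / (27/10).
Proof.
  split. apply exp_pos.
  replace (-1) with (- (1)) by ring. rewrite exp_Ropp. apply Rinv_lt_contravar. generalize e_gt; lra. exact e_gt.
Qed.

Lemma rp_inv x g : 0 < x -> Rpower (/ x) g = / Rpower x g.
Proof. intros Hx. unfold Rpower. rewrite ln_Rinv by lra. rewrite <- exp_Ropp. f_equal; ring. Qed.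

Lemma key_ineq g : 0 < g < 1 ->
  exp (-1) * (1 + Rpower 2 (- g)) + Rpower 3 (- g) * (1 - 2 * exp (-1)) <= Rpower (2/3) g.
Proof.
  intros Hg.
  set (X := Rpower 2 g). set (Z := Rpower (3/4) g). set (a := exp (-1)).
  assert (HX : 0 < X) by apply rp_pos. assert (HZ : 0 < Z) by apply rp_pos.
  assert (HX1 : X <= 1 + g) by (generalize (rp_upper 2 g ltac:(lra) Hg); unfold X; lra).
  assert (HZ1 : Z <= 1 - g / 4) by (generalize (rp_upper (3/4) g ltac:(lra) Hg); unfold Z; lra).
  assert (HX0 : 1 <= X).
  { unfold X, Rpower. generalize (exp_ineq1_le (g * ln 2)).
    assert (0 < ln 2) by (rewrite <- ln_1; apply ln_increasing; lra). nra. }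
  assert (E1 : Rpower 2 (- g) = / X) by apply Rpower_Ropp.
  assert (E2 : Rpower 3 (- g) = / (X * X * Z)).
  { rewrite Rpower_Ropp. unfold X, Z. rewrite !Rpower_mult_distr by lra. do 2 f_equal; lra. }
  assert (E3 : Rpower (2/3) g = / (X * Z)).
  { unfold X, Z. rewrite Rpower_mult_distr by lra. replace (2/3) with (/ (2 * (3/4))) by field.
    apply rp_inv; lra. }
  rewrite E1, E2, E3. fold a.
  destruct expm1_bound as [Ha1 Ha2]. fold a in Ha1, Ha2.
  assert (Hmain : a * (X * X * Z + X * Z) + (1 - 2 * a) <= X).
  { assert (HZ2 : Z <= (5 - X) / 4) by lra.
    assert (H1 : a * (X * X * Z + X * Z) <= a * (X * X + X) * ((5 - X) / 4)).
    { assert (0 <= a * (X * X + X)) by nra. nra. }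
    assert (H2 : a * (- X * X + 3 * X + 8) <= 4).
    { assert (- X * X + 3 * X + 8 <= (41/4)) by (generalize (pow2_ge_0 (X - 3/2)); nra).
      assert (0 <= - X * X + 3 * X + 8) by nra.
      assert (a * (41/4) <= 4).
      { assert (/ (27/10) * (41/4) < 4) by (apply (Rmult_lt_reg_l (27/10)); [lra|]; field_simplify; lra). nra. }
      nra. }
    assert (X - (a * (X * X + X) * ((5 - X) / 4) + (1 - 2 * a)) = (X - 1) * (1 - a * (- X * X + 3 * X + 8) / 4)) by field.
    assert (0 <= (X - 1) * (1 - a * (- X * X + 3 * X + 8) / 4)).
    { apply Rmult_le_pos; lra. }
    lra. }
  assert (HXZ : 0 < X * X * Z) by (apply Rmult_lt_0_compat; nra).
  apply (Rmult_le_reg_r (X * X * Z)); [exact HXZ|].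
  replace ((a * (1 + / X) + / (X * X * Z) * (1 - 2 * a)) * (X * X * Z)) with
    (a * (X * X * Z + X * Z) + (1 - 2 * a)) by (field; lra).
  replace (/ (X * Z) * (X * X * Z)) with X by (field; lra).
  exact Hmain.
Qed.

Lemma series_le_lim a b la lb : is_series a la -> is_series b lb ->
  (forall n, a n <= b n) -> la <= lb.
Proof.
  intros Ha Hb H.
  assert (Hl := is_lim_seq_le (sum_n a) (sum_n b) la lb).
  simpl in Hl. apply Hl; [|exact Ha|exact Hb].
  intros n. rewrite !sum_n_Reals. apply sum_Rle. intros; apply H.
Qed.

Lemma is_series_shift1 a l : a 0%nat = 0 -> is_series (fun k => a (S k)) l -> is_series a l.
Proof.
  intros H0 H. apply is_series_decr_1. rewrite H0.
  match goal with |- is_series _ ?L => replace L with l; [exact H|] end.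
  simpl. unfold plus, opp; simpl. rewrite Ropp_0, Rplus_0_r. reflexivity.
Qed.

Ltac toR := match goal with |- ?A = ?B => change (@eq R A B) end.

Lemma is_series_Rscal c a l : is_series a l -> is_series (fun n => c * a n) (c * l).
Proof. intros H. exact (is_series_scal_l c a l H). Qed.

Lemma is_series_Rplus a b la lb : is_series a la -> is_series b lb ->
  is_series (fun n => a n + b n) (la + lb).
Proof. intros H1 H2. exact (is_series_plus a b la lb H1 H2). Qed.

Lemma is_series_Rminus a b la lb : is_series a la -> is_series b lb ->
  is_series (fun n => a n - b n) (la - lb).
Proof. intros H1 H2. exact (is_series_minus a b la lb H1 H2). Qed.

Lemma exp_series x : is_series (fun k => x ^ k / INR (Factorial.fact k)) (exp x).
Proof.
  generalize (is_exp_Reals x). unfold is_pseries. apply is_series_ext.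
  intros n. rewrite pow_n_pow. reflexivity.
Qed.

Definition pt (x : R) (k : nat) := exp (- x) * x ^ k / INR (Factorial.fact k).

Lemma pt_pos x k : 0 < x -> 0 < pt x k.
Proof.
  intros Hx. unfold pt. apply Rdiv_lt_0_compat. apply Rmult_lt_0_compat.
  apply exp_pos. now apply pow_lt. apply INR_fact_lt_0.
Qed.

Lemma pt_S x k : pt x (S k) * INR (S k) = x * pt x k.
Proof.
  unfold pt. change (Factorial.fact (S k)) with (S k * Factorial.fact k)%nat. rewrite mult_INR. simpl pow.
  field. split. apply INR_fact_neq_0. apply not_0_INR; lia.
Qed.

Lemma S1 x : is_series (pt x) 1.
Proof.
  replace 1 with (exp (- x) * exp x) by (rewrite <- exp_plus; replace (-x + x) with 0 by ring; apply exp_0).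
  generalize (is_series_Rscal (exp (- x)) _ _ (exp_series x)). apply is_series_ext.
  intros n. toR. unfold pt. field. apply INR_fact_neq_0.
Qed.

Lemma M1 x : is_series (fun k => pt x k * INR k) x.
Proof.
  apply is_series_shift1. simpl. ring.
  generalize (is_series_Rscal x _ _ (S1 x)). rewrite Rmult_1_r.
  apply is_series_ext. intros n. rewrite pt_S. reflexivity.
Qed.

Lemma M2 x : is_series (fun k => pt x k * INR k ^ 2) (x ^ 2 + x).
Proof.
  apply is_series_shift1. simpl. ring.
  generalize (is_series_Rscal x _ _ (is_series_Rplus _ _ _ _ (M1 x) (S1 x))).
  replace (x * (x + 1)) with (x ^ 2 + x) by ring.
  apply is_series_ext. intros n.
  toR. cbv beta. replace (pt x (S n) * INR (S n) ^ 2) with ((pt x (S n) * INR (S n)) * INR (S n)) by ring.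
  rewrite pt_S. rewrite S_INR. ring.
Qed.

Lemma phi_nonneg g K : 0 <= phi g K.
Proof. unfold phi. destruct (Rle_dec K 0). lra. left; apply rp_pos. Qed.

Lemma phi_pos g K : 0 < K -> phi g K = Rpower K (1 - g).
Proof. intros H. unfold phi. destruct (Rle_dec K 0). lra. reflexivity. Qed.

Lemma phi_split g K : 0 < K -> phi g K = K * Rpower K (- g).
Proof.
  intros H. rewrite phi_pos by exact H. replace (1 - g) with (1 + - g) by ring.
  rewrite Rpower_plus, Rpower_1 by exact H. reflexivity.
Qed.

Lemma phi_le_nat g k : 0 < g < 1 -> phi g (INR k) <= INR k.
Proof.
  intros Hg. destruct k as [|k].
  - unfold phi. simpl. destruct (Rle_dec 0 0); lra.
  - assert (H1 : 1 <= INR (S k)) by (apply (le_INR 1); lia).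
    rewrite phi_pos by lra. rewrite <- (Rpower_1 (INR (S k))) at 2 by lra.
    apply Rle_Rpower; lra.
Qed.

Lemma pois_ex x g : 0 < x -> 0 < g < 1 -> ex_series (fun k => pt x k * phi g (INR k)).
Proof.
  intros Hx Hg. apply (@ex_series_le R_AbsRing R_CompleteNormedModule _ (fun k => pt x k * INR k)).
  - intros n. change (norm (pt x n * phi g (INR n))) with (Rabs (pt x n * phi g (INR n))).
    rewrite Rabs_pos_eq.
    + apply Rmult_le_compat_l. left; apply pt_pos; exact Hx. apply phi_le_nat; exact Hg.
    + apply Rmult_le_pos. left; apply pt_pos; exact Hx. apply phi_nonneg.
  - exists x. apply M1.
Qed.

Lemma pois_eq x g : pois_expect x (phi g) = Series (fun k => pt x k * phi g (INR k)).
Proof. reflexivity. Qed.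

Lemma phi_lower g x K : 0 < g < 1 -> 0 < x -> 0 <= K ->
  Rpower (x + 1) (- g) * (K * (1 + g) - g * K ^ 2 / (x + 1)) <= phi g K.
Proof.
  intros Hg Hx HK. set (c := Rpower (x + 1) (- g)).
  assert (Hc : 0 < c) by apply rp_pos.
  destruct (Req_dec K 0) as [->|HK0].
  - replace (c * (0 * (1 + g) - g * 0 ^ 2 / (x + 1))) with 0 by (field; lra). apply phi_nonneg.
  - assert (HKp : 0 < K) by lra. rewrite phi_split by exact HKp.
    assert (E : Rpower K (- g) = Rpower (K / (x + 1)) (- g) * c).
    { unfold c. rewrite Rpower_mult_distr. f_equal. field. lra.
      apply Rdiv_lt_0_compat; lra. lra. }
    rewrite E.
    assert (Hl := rp_lower (K / (x + 1)) (- g) ltac:(apply Rdiv_lt_0_compat; lra) ltac:(lra)).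
    assert (H2 : K * c * (1 + - g * (K / (x + 1) - 1)) <= K * c * Rpower (K / (x + 1)) (- g)).
    { apply Rmult_le_compat_l. nra. exact Hl. }
    replace (c * (K * (1 + g) - g * K ^ 2 / (x + 1))) with (K * c * (1 + - g * (K / (x + 1) - 1))) by (field; lra).
    lra.
Qed.

Lemma pois_lower x g : 0 < x -> 0 < g < 1 ->
  Rpower (x + 1) (- g) * x <= pois_expect x (phi g).
Proof.
  intros Hx Hg. set (c := Rpower (x + 1) (- g)).
  rewrite pois_eq.
  assert (HL : is_series (fun k => pt x k * (c * (INR k * (1 + g) - g * INR k ^ 2 / (x + 1)))) (c * x)).
  { generalize (is_series_Rminus _ _ _ _ (is_series_Rscal (c * (1 + g)) _ _ (M1 x))
                 (is_series_Rscal (c * g / (x + 1)) _ _ (M2 x))).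
    replace (c * (1 + g) * x - c * g / (x + 1) * (x ^ 2 + x)) with (c * x) by (field; lra).
    apply is_series_ext. intros n. toR. field. lra. }
  apply (series_le_lim _ _ _ _ HL (Series_correct _ (pois_ex x g Hx Hg))).
  intros n. apply Rmult_le_compat_l. left; apply pt_pos; exact Hx.
  apply phi_lower; try lra. apply pos_INR.
Qed.

Lemma ratio_lower (n : nat) g : (2 <= n)%nat -> 0 < g < 1 ->
  Rpower (2/3) g <= pois_expect (INR n) (phi g) / phi g (INR n).
Proof.
  intros Hn Hg. set (x := INR n).
  assert (Hx2 : 2 <= x) by (unfold x; apply (le_INR 2); exact Hn).
  assert (Hx : 0 < x) by lra.
  rewrite (phi_pos g x Hx).
  assert (Hp : 0 < Rpower x (1 - g)) by apply rp_pos.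
  apply Rle_trans with (Rpower (x + 1) (- g) * x / Rpower x (1 - g)).
  2:{ unfold Rdiv. apply Rmult_le_compat_r. left; apply Rinv_0_lt_compat; exact Hp.
      apply pois_lower; assumption. }
  assert (E : Rpower (x + 1) (- g) * x / Rpower x (1 - g) = Rpower (x / (x + 1)) g).
  { assert (Ex : x = Rpower x g * Rpower x (1 - g)).
    { rewrite <- Rpower_plus. replace (g + (1 - g)) with 1 by ring. now rewrite Rpower_1. }
    rewrite Rpower_Ropp. unfold Rdiv. rewrite <- (rp_inv (x + 1)) by lra.
    rewrite <- Rpower_mult_distr by (try apply Rinv_0_lt_compat; lra).
    assert (Ex' : x * / Rpower x (1 - g) = Rpower x g).
    { apply (Rmult_eq_reg_r (Rpower x (1 - g))); [|lra].
      rewrite Rmult_assoc, Rinv_l by lra. rewrite Rmult_1_r. exact Ex. }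
    rewrite Rmult_assoc, Ex'. ring. }
  rewrite E. apply Rle_Rpower_l. lra. split. lra.
  apply (Rmult_le_reg_r (3 * (x + 1))). lra.
  field_simplify; lra.
Qed.

Lemma rpower_1_l y : Rpower 1 y = 1.
Proof. unfold Rpower. rewrite ln_1, Rmult_0_r. apply exp_0. Qed.

Lemma phi_1 g : phi g 1 = 1.
Proof. rewrite phi_pos by lra. apply rpower_1_l. Qed.

Lemma pt1 k : pt 1 k = exp (-1) / INR (Factorial.fact k).
Proof. unfold pt. rewrite pow1. replace (- (1)) with (-1) by ring. unfold Rdiv. ring. Qed.

Lemma ratio1_upper g : 0 < g < 1 ->
  pois_expect (INR 1) (phi g) / phi g (INR 1) <=
  exp (-1) * (1 + Rpower 2 (- g)) + Rpower 3 (- g) * (1 - 2 * exp (-1)).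
Proof.
  intros Hg. change (INR 1) with 1. rewrite phi_1. unfold Rdiv. rewrite Rinv_1, Rmult_1_r.
  rewrite pois_eq.
  rewrite (Series_incr_n _ 3) by (lia || (apply pois_ex; lra)).
  set (v := Rpower 3 (- g)).
  set (m := fun k => pt 1 k * INR k).
  assert (Hm : is_series (fun k => m (3 + k)%nat) (1 - 2 * exp (-1))).
  { apply is_series_incr_n. lia.
    match goal with |- is_series _ ?L => replace L with 1; [apply M1|] end.
    rewrite sum_n_Reals. simpl. unfold m, plus; simpl. rewrite !pt1. simpl.
    field. }
  assert (Ht : Series (fun k => pt 1 (3 + k) * phi g (INR (3 + k))) <= v * (1 - 2 * exp (-1))).
  { rewrite <- (is_series_unique _ _ (is_series_Rscal v _ _ Hm)).
    apply Series_le.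
    - intros n. split.
      + apply Rmult_le_pos. left; apply pt_pos; lra. apply phi_nonneg.
      + unfold m. assert (HK : 3 <= INR (3 + n)) by (rewrite plus_INR; assert (INR 3 = 3) by (simpl; ring); generalize (pos_INR n); lra).
        rewrite phi_split by lra.
        assert (Hv : Rpower (INR (3 + n)) (- g) <= v).
        { unfold v. rewrite !Rpower_Ropp. apply Rinv_le_contravar. apply rp_pos.
          apply Rle_Rpower_l; lra. }
        assert (0 < pt 1 (3 + n)) by (apply pt_pos; lra).
        set (K := INR (3 + n)) in *. set (P := pt 1 (3 + n)) in *.
        replace (v * (P * K)) with ((P * K) * v) by ring.
        replace (P * (K * Rpower K (- g))) with ((P * K) * Rpower K (- g)) by ring.
        apply Rmult_le_compat_l; [nra|exact Hv].
    - eexists. apply is_series_Rscal. exact Hm. }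
  assert (Hs : sum_f_R0 (fun k => pt 1 k * phi g (INR k)) (Init.Nat.pred 3) =
               exp (-1) * (1 + Rpower 2 (- g))).
  { simpl. rewrite !pt1. replace (INR 0) with 0 by reflexivity.
    replace (1 + 1) with 2 by ring.
    replace (phi g 0) with 0 by (unfold phi; destruct (Rle_dec 0 0); lra).
    rewrite phi_1. rewrite (phi_split g 2) by lra.
    simpl. field. }
  rewrite Hs. unfold v in *. lra.
Qed.

Lemma Rball x (e : posreal) y : ball x e y <-> Rabs (y - x) < e.
Proof. split; intros H; exact H. Qed.

Definition Fz := at_right 0.
Definition Fi := Rbar_locally p_infty.

Lemma gen_char (f : R -> R) Fa Fb {FFa : Filter Fa} {FFb : Filter Fb} l :
  is_RInt_gen f Fa Fb l <->
  (forall eps : posreal, filter_prod Fa Fb (fun ab => exists z, is_RInt f (fst ab) (snd ab) z /\ Rabs (z - l) < eps)).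
Proof.
  unfold is_RInt_gen. rewrite filterlimi_locally. reflexivity.
Qed.

Lemma Fz_Fi_ev (P : R -> R -> Prop) a0 b0 : 0 < a0 ->
  (forall a b, 0 < a < a0 -> b0 < b -> P a b) ->
  filter_prod Fz Fi (fun ab => P (fst ab) (snd ab)).
Proof.
  intros Ha0 H. apply (Filter_prod _ _ _ (fun a => 0 < a < a0) (fun b => b0 < b)).
  - exists (mkposreal a0 Ha0). intros y Hy Hy0. apply Rball in Hy. simpl in Hy.
    split; [exact Hy0|]. apply Rabs_def2 in Hy. unfold minus, plus, opp in Hy; simpl in Hy. lra.
  - exists b0. auto.
  - intros x y Hx Hy. simpl. now apply H.
Qed.

Lemma ex_RInt_pos (f : R -> R) a b : 0 < a -> 0 < b -> (forall x, 0 < x -> continuous f x) -> ex_RInt f a b.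
Proof.
  intros Ha Hb Hc. apply (@ex_RInt_continuous R_CompleteNormedModule). intros z Hz. apply Hc.
  generalize (Rmin_glb_lt a b 0 Ha Hb). lra.
Qed.

Lemma mono_gen (f : R -> R) M :
  (forall x, 0 < x -> continuous f x) -> (forall x, 0 < x -> 0 <= f x) ->
  (forall a b, 0 < a -> a <= b -> RInt f a b <= M) ->
  exists l, is_RInt_gen f Fz Fi l /\ (forall a b, 0 < a -> a <= b -> RInt f a b <= l).
Proof.
  intros Hc Hp HM.
  set (E := fun r => exists a b, 0 < a /\ a <= b /\ r = RInt f a b).
  assert (HB : bound E). { exists M. intros r [a [b [Ha [Hab ->]]]]. now apply HM. }
  assert (HE : exists x, E x). { exists (RInt f 1 1). exists 1, 1. repeat split; lra. }
  destruct (completeness E HB HE) as [l [Hub Hlub]].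
  assert (Hup : forall a b, 0 < a -> a <= b -> RInt f a b <= l).
  { intros a b Ha Hab. apply Hub. exists a, b. auto. }
  exists l. split; [|exact Hup].
  apply gen_char; try typeclasses eauto. intros eps.
  assert (Hex : exists a0 b0, 0 < a0 /\ a0 <= b0 /\ l - eps < RInt f a0 b0).
  { apply NNPP. intros Hn.
    assert (Hb' : is_upper_bound E (l - eps)).
    { intros r [a [b [Ha [Hab ->]]]]. apply Rnot_lt_le. intros Hlt. apply Hn. exists a, b. auto. }
    specialize (Hlub _ Hb'). destruct eps; simpl in *; lra. }
  destruct Hex as [a0 [b0 [Ha0 [Hab0 Hlt]]]].
  apply (Fz_Fi_ev (fun a b => exists z, is_RInt f a b z /\ Rabs (z - l) < eps) a0 b0 Ha0).
  intros a b Ha Hb. exists (RInt f a b). split.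
  - apply (@RInt_correct R_CompleteNormedModule). apply ex_RInt_pos; [lra|lra|assumption].
  - assert (Hle : RInt f a b <= l) by (apply Hup; lra).
    assert (HC : RInt f a b = RInt f a a0 + RInt f a0 b0 + RInt f b0 b).
    { rewrite <- (@RInt_Chasles R_CompleteNormedModule f a a0 b) by (apply ex_RInt_pos; [lra|lra|assumption]).
      rewrite <- (@RInt_Chasles R_CompleteNormedModule f a0 b0 b) by (apply ex_RInt_pos; [lra|lra|assumption]).
      unfold plus; simpl. ring. }
    assert (H1 : 0 <= RInt f a a0).
    { apply RInt_ge_0. lra. apply ex_RInt_pos; [lra|lra|assumption]. intros; apply Hp; lra. }
    assert (H2 : 0 <= RInt f b0 b).
    { apply RInt_ge_0. lra. apply ex_RInt_pos; [lra|lra|assumption]. intros; apply Hp; lra. }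
    rewrite Rabs_left1 by lra. lra.
Qed.

Lemma cov (f phi dphi : R -> R) Fa Fb Ga Gb {FFa : Filter Fa} {FFb : Filter Fb}
  {FGa : Filter Ga} {FGb : Filter Gb} l :
  filter_prod Fa Fb (fun ab => forall x, Rmin (fst ab) (snd ab) <= x <= Rmax (fst ab) (snd ab) ->
     continuous f (phi x) /\ is_derive phi x (dphi x) /\ continuous dphi x) ->
  filterlim phi Fa Ga -> filterlim phi Fb Gb -> is_RInt_gen f Ga Gb l ->
  is_RInt_gen (fun y => dphi y * f (phi y)) Fa Fb l.
Proof.
  intros Hd Ha Hb Hl. apply gen_char; try assumption. intros eps.
  destruct (proj1 (gen_char f Ga Gb l) Hl eps) as [Q R0 HQ HR HQR].
  assert (HP : filter_prod Fa Fb (fun ab => Q (phi (fst ab)) /\ R0 (phi (snd ab)))).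
  { apply (Filter_prod _ _ _ (fun a => Q (phi a)) (fun b => R0 (phi b))).
    apply Ha, HQ. apply Hb, HR. intros; simpl; auto. }
  generalize (filter_and _ _ Hd HP). apply filter_imp. intros [a b] [H1 [H2 H3]]. simpl in *.
  destruct (HQR _ _ H2 H3) as [z [Hz Hzl]]. exists z. split; [|exact Hzl].
  assert (Hc := @is_RInt_comp R_CompleteNormedModule f phi dphi a b).
  rewrite (@is_RInt_unique R_CompleteNormedModule f (phi a) (phi b) z Hz) in Hc.
  apply Hc.
  - intros x Hx. apply (H1 x Hx).
  - intros x Hx. split; apply (H1 x Hx).
Qed.

Lemma sq_gen (f h : R -> R) (p : nat -> R -> R) (A e : nat -> R) (H L : R) :
  (forall x, 0 < x -> continuous f x) -> is_RInt_gen h Fz Fi H ->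
  (forall N, is_RInt_gen (p N) Fz Fi (A N)) ->
  (forall N x, 0 < x -> Rabs (f x - p N x) <= e N * h x) -> (forall N, 0 <= e N) ->
  is_lim_seq A L -> is_lim_seq e 0 -> is_RInt_gen f Fz Fi L.
Proof.
  intros Hc Hh Hp Hb He HA He0.
  assert (FFz : Filter Fz) by (unfold Fz; typeclasses eauto).
  assert (FFi : Filter Fi) by (unfold Fi; typeclasses eauto).
  apply gen_char; try assumption. intros eps.
  assert (He3 : 0 < eps / 3) by (destruct eps; simpl; lra).
  set (e3 := mkposreal _ He3).
  assert (Hd : 0 < e3 / (Rabs H + 2)) by (apply Rdiv_lt_0_compat; [apply cond_pos| generalize (Rabs_pos H); lra]).
  set (d := mkposreal _ Hd).
  apply is_lim_seq_spec in HA. apply is_lim_seq_spec in He0.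
  assert (HA2 := (HA : forall eps : posreal, eventually (fun n => Rabs (A n - L) < eps)) e3).
  assert (He2 := (He0 : forall eps : posreal, eventually (fun n => Rabs (e n - 0) < eps)) d).
  clear HA He0. rename HA2 into HA. rename He2 into He0.
  destruct (filter_and _ _ HA He0) as [N0 HN0].
  destruct (HN0 N0 (le_n _)) as [HAN HeN]. set (N := N0) in *.
  assert (HeN' : e N < e3 / (Rabs H + 2)).
  { simpl in HeN. rewrite Rminus_0_r in HeN. apply Rabs_def2 in HeN. simpl. lra. }
  assert (G1 := proj1 (gen_char (p N) Fz Fi (A N)) (Hp N) e3).
  assert (G2 := proj1 (gen_char h Fz Fi H) Hh (mkposreal 1 Rlt_0_1)).
  assert (G3 := Fz_Fi_ev (fun a b => 0 < a /\ a < b) 1 1 Rlt_0_1 ltac:(intros; lra)).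
  generalize (filter_and _ _ G3 (filter_and _ _ G1 G2)). apply filter_imp.
  intros [a b] [[Ha Hab] [[z1 [Hz1 Hz1l]] [z2 [Hz2 Hz2l]]]]. simpl in *.
  exists (RInt f a b). split.
  { apply (@RInt_correct R_CompleteNormedModule). apply ex_RInt_pos; [lra|lra|assumption]. }
  assert (Hn := norm_RInt_le (fun y => minus (f y) (p N y)) (fun y => e N * h y) a b
                 (minus (RInt f a b) z1) (e N * z2) ltac:(lra)).
  assert (Hn' : Rabs (RInt f a b - z1) <= e N * z2).
  { apply Hn.
    - intros x Hx. change (norm (minus (f x) (p N x))) with (Rabs (f x - p N x)). apply Hb. lra.
    - apply (@is_RInt_minus R_NormedModule); [|exact Hz1]. apply (@RInt_correct R_CompleteNormedModule).
      apply ex_RInt_pos; [lra|lra|assumption].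
    - exact (@is_RInt_scal R_NormedModule h a b (e N) z2 Hz2). }
  assert (Hz2' : z2 <= Rabs H + 1).
  { apply Rabs_def2 in Hz2l. generalize (Rle_abs H). lra. }
  assert (HeN2 : e N * z2 <= e N * (Rabs H + 1)) by (apply Rmult_le_compat_l; [apply He|exact Hz2']).
  assert (HeN3 : e N * (Rabs H + 1) < e3).
  { assert (HH : 0 < Rabs H + 2) by (generalize (Rabs_pos H); lra).
    apply Rle_lt_trans with (e3 / (Rabs H + 2) * (Rabs H + 1)).
    apply Rmult_le_compat_r. generalize (Rabs_pos H); lra. left. exact HeN'.
    apply (Rmult_lt_reg_r (Rabs H + 2)). exact HH.
    replace (e3 / (Rabs H + 2) * (Rabs H + 1) * (Rabs H + 2)) with (e3 * (Rabs H + 1)) by (field; lra).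
    apply Rmult_lt_compat_l. apply cond_pos. lra. }
  simpl in HAN. unfold e3 in *; simpl in *.
  apply Rabs_def2 in HAN. apply Rabs_def2 in Hz1l. assert (Hn'' : RInt f a b - z1 <= e N * z2 /\ -(e N * z2) <= RInt f a b - z1).
  { split. apply Rle_trans with (Rabs (RInt f a b - z1)); [apply Rle_abs|exact Hn'].
    generalize (Rle_abs (-(RInt f a b - z1))). rewrite Rabs_Ropp. lra. }
  apply Rabs_def1; lra.
Qed.

Lemma Fz_intro (P : R -> Prop) d : 0 < d -> (forall y, 0 < y < d -> P y) -> Fz P.
Proof.
  intros Hd H. exists (mkposreal d Hd). intros y Hy Hy0. apply Rball in Hy. simpl in Hy.
  apply Rabs_def2 in Hy. apply H. unfold minus, plus, opp in Hy; simpl in Hy. lra.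
Qed.

Lemma Fz_elim (P : R -> Prop) : Fz P -> exists d, 0 < d /\ forall y, 0 < y < d -> P y.
Proof.
  intros [d Hd]. exists d. split. apply cond_pos. intros y Hy. apply Hd. 2: lra.
  apply Rball. rewrite Rminus_0_r, Rabs_pos_eq; lra.
Qed.

Lemma L1_intro (P : R -> Prop) d : 0 < d -> (forall y, 1 - d < y < 1 -> P y) -> at_left 1 P.
Proof.
  intros Hd H. exists (mkposreal d Hd). intros y Hy Hy0. apply Rball in Hy. simpl in Hy.
  apply Rabs_def2 in Hy. apply H. unfold minus, plus, opp in Hy; simpl in Hy. lra.
Qed.

Lemma fl_Fz_Fz (phi : R -> R) : (forall d, 0 < d -> exists d', 0 < d' /\ forall t, 0 < t < d' -> 0 < phi t < d) ->
  filterlim phi Fz Fz.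
Proof.
  intros H P HP. destruct (Fz_elim P HP) as [d [Hd HdP]]. destruct (H d Hd) as [d' [Hd' H']].
  apply (Fz_intro _ d' Hd'). intros y Hy. apply HdP, H', Hy.
Qed.

Lemma fl_Fi_Fi (phi : R -> R) : (forall M, exists M', forall t, M' < t -> M < phi t) ->
  filterlim phi Fi Fi.
Proof.
  intros H P [M HM]. destruct (H M) as [M' HM']. exists M'. intros t Ht. apply HM, HM', Ht.
Qed.

Lemma fl_Fz_Fi (phi : R -> R) : (forall M, exists d', 0 < d' /\ forall t, 0 < t < d' -> M < phi t) ->
  filterlim phi Fz Fi.
Proof.
  intros H P [M HM]. destruct (H M) as [d' [Hd' H']].
  apply (Fz_intro _ d' Hd'). intros y Hy. apply HM, H', Hy.
Qed.

Lemma fl_L1_Fz (phi : R -> R) : (forall d, 0 < d -> exists d', 0 < d' /\ forall t, 1 - d' < t < 1 -> 0 < phi t < d) ->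
  filterlim phi (at_left 1) Fz.
Proof.
  intros H P HP. destruct (Fz_elim P HP) as [d [Hd HdP]]. destruct (H d Hd) as [d' [Hd' H']].
  apply (L1_intro _ d' Hd'). intros y Hy. apply HdP, H', Hy.
Qed.

Lemma cont_rp y t : 0 < t -> continuous (fun x => Rpower x y) t.
Proof.
  intros Ht. apply (@ex_derive_continuous R_AbsRing R_NormedModule). exists (y * Rpower t (y - 1)).
  apply is_derive_Reals. apply derivable_pt_lim_power. exact Ht.
Qed.

Definition hg g t := Rpower t (g - 1) * exp (- t).
Definition hc g c t := Rpower t (g - 1) * exp (- (c * t)).
Definition fg g t := Rpower t (g - 1) * exp (- t) * exp (exp (- t)).
Definition w g x := exp x / Rpower (- ln x) (1 - g).

Lemma cont_exp_aff a t : continuous (fun x => exp (a * x)) t.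
Proof. apply (@ex_derive_continuous R_AbsRing R_NormedModule). auto_derive. auto. Qed.

Lemma cont_hc g c t : 0 < t -> continuous (hc g c) t.
Proof.
  intros Ht. unfold hc. apply (continuous_mult (fun x => Rpower x (g - 1)) (fun x => exp (- (c * x)))).
  apply cont_rp, Ht. apply (@ex_derive_continuous R_AbsRing R_NormedModule). auto_derive. auto.
Qed.

Lemma cont_hg g t : 0 < t -> continuous (hg g) t.
Proof.
  intros Ht. unfold hg. apply (continuous_mult (fun x => Rpower x (g - 1)) (fun x => exp (- x))).
  apply cont_rp, Ht. apply (@ex_derive_continuous R_AbsRing R_NormedModule). auto_derive. auto.
Qed.

Lemma cont_fg g t : 0 < t -> continuous (fg g) t.
Proof.
  intros Ht. unfold fg. apply (continuous_mult (fun x => Rpower x (g - 1) * exp (- x)) (fun x => exp (exp (- x)))).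
  apply (cont_hg g t Ht). apply (@ex_derive_continuous R_AbsRing R_NormedModule). auto_derive. auto.
Qed.

Lemma rp1 y : Rpower 1 y = 1.
Proof. unfold Rpower. rewrite ln_1, Rmult_0_r. apply exp_0. Qed.

Lemma hg_pos g t : 0 < hg g t.
Proof. unfold hg. apply Rmult_lt_0_compat. apply rp_pos. apply exp_pos. Qed.

Lemma ex_RInt_hg g a b : 0 < a -> 0 < b -> ex_RInt (hg g) a b.
Proof. intros. apply ex_RInt_pos; try assumption. intros; apply cont_hg; assumption. Qed.

Lemma pow_int g a : 0 < g < 1 -> 0 < a -> a <= 1 ->
  is_RInt (fun t => Rpower t (g - 1)) a 1 (1 / g - Rpower a g / g).
Proof.
  intros Hg Ha Ha1.
  assert (H := @is_RInt_derive R_CompleteNormedModule (fun t => / g * Rpower t g) (fun t => Rpower t (g - 1)) a 1).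
  replace (1 / g - Rpower a g / g) with (minus (/ g * Rpower 1 g) (/ g * Rpower a g)).
  2:{ unfold minus, plus, opp; simpl. rewrite rp1. field. lra. }
  apply H.
  - intros x Hx. assert (0 < x) by (generalize (Rmin_glb_lt a 1 0 Ha Rlt_0_1); lra).
    replace (Rpower x (g - 1)) with (/ g * (g * Rpower x (g - 1))) by (field; lra).
    apply is_derive_scal. apply is_derive_Reals. apply derivable_pt_lim_power. lra.
  - intros x Hx. apply cont_rp. generalize (Rmin_glb_lt a 1 0 Ha Rlt_0_1); lra.
Qed.

Lemma exp_int b : 1 <= b -> is_RInt (fun t => exp (- t)) 1 b (exp (- (1)) - exp (- b)).
Proof.
  intros Hb.
  assert (H := @is_RInt_derive R_CompleteNormedModule (fun t => - exp (- t)) (fun t => exp (- t)) 1 b).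
  replace (exp (- (1)) - exp (- b)) with (minus (- exp (- b)) (- exp (- (1)))).
  2:{ unfold minus, plus, opp; simpl. ring. }
  apply H.
  - intros x Hx. auto_derive. auto. ring.
  - intros x Hx. apply (@ex_derive_continuous R_AbsRing R_NormedModule). auto_derive. auto.
Qed.

Lemma hg_bound g a b : 0 < g < 1 -> 0 < a -> a <= b -> RInt (hg g) a b <= 1 / g + 1.
Proof.
  intros Hg Ha Hab.
  set (a' := Rmin a 1). set (b' := Rmax b 1).
  assert (Ha' : 0 < a') by (apply Rmin_glb_lt; lra).
  assert (Ha'1 : a' <= 1) by apply Rmin_r. assert (Ha'a : a' <= a) by apply Rmin_l.
  assert (Hb'1 : 1 <= b') by apply Rmax_r. assert (Hb'b : b <= b') by apply Rmax_l.
  assert (C1 : RInt (hg g) a' b' = RInt (hg g) a' a + RInt (hg g) a b + RInt (hg g) b b').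
  { rewrite <- (@RInt_Chasles R_CompleteNormedModule (hg g) a' b b') by (apply ex_RInt_hg; lra).
    rewrite <- (@RInt_Chasles R_CompleteNormedModule (hg g) a' a b) by (apply ex_RInt_hg; lra).
    reflexivity. }
  assert (C2 : RInt (hg g) a' b' = RInt (hg g) a' 1 + RInt (hg g) 1 b').
  { rewrite <- (@RInt_Chasles R_CompleteNormedModule (hg g) a' 1 b') by (apply ex_RInt_hg; lra).
    reflexivity. }
  assert (P1 : 0 <= RInt (hg g) a' a).
  { apply RInt_ge_0. lra. apply ex_RInt_hg; lra. intros; left; apply hg_pos. }
  assert (P2 : 0 <= RInt (hg g) b b').
  { apply RInt_ge_0. lra. apply ex_RInt_hg; lra. intros; left; apply hg_pos. }
  assert (B1 : RInt (hg g) a' 1 <= 1 / g).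
  { apply Rle_trans with (RInt (fun t => Rpower t (g - 1)) a' 1).
    - apply RInt_le. lra. apply ex_RInt_hg; lra.
      eexists. apply (pow_int g a'); lra.
      intros x Hx. unfold hg. assert (0 < Rpower x (g - 1)) by apply rp_pos.
      assert (exp (- x) <= 1) by (rewrite <- exp_0; left; apply exp_increasing; lra).
      nra.
    - rewrite (is_RInt_unique _ _ _ _ (pow_int g a' Hg Ha' Ha'1)).
      assert (0 < Rpower a' g / g) by (apply Rdiv_lt_0_compat; [apply rp_pos|lra]). lra. }
  assert (B2 : RInt (hg g) 1 b' <= 1).
  { apply Rle_trans with (RInt (fun t => exp (- t)) 1 b').
    - apply RInt_le. lra. apply ex_RInt_hg; lra.
      eexists. apply (exp_int b'); lra.
      intros x Hx. unfold hg.
      assert (Rpower x (g - 1) <= 1).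
      { apply Rle_trans with (Rpower x 0); [apply Rle_Rpower; lra | rewrite Rpower_O; lra]. }
      assert (0 < exp (- x)) by apply exp_pos. nra.
    - rewrite (is_RInt_unique _ _ _ _ (exp_int b' Hb'1)).
      assert (0 < exp (- b')) by apply exp_pos.
      assert (exp (- (1)) <= 1) by (apply Rle_trans with (exp 0); [left; apply exp_increasing; lra | rewrite exp_0; lra]). lra. }
  lra.
Qed.

Lemma gamma_ex g : 0 < g < 1 -> exists G0, is_RInt_gen (hg g) Fz Fi G0 /\ 0 < G0.
Proof.
  intros Hg.
  destruct (mono_gen (hg g) (1 / g + 1)) as [G0 [HG0 Hup]].
  - intros; apply cont_hg; assumption.
  - intros; left; apply hg_pos.
  - intros; apply hg_bound; assumption.
  - exists G0. split; [exact HG0|].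
    apply Rlt_le_trans with (RInt (hg g) 1 2); [|apply Hup; lra].
    assert (H := RInt_lt (fun _ => 0) (hg g) 1 2 ltac:(lra)).
    assert (Hz : RInt (fun _ : R => 0) 1 2 = 0).
    { rewrite (@RInt_const R_CompleteNormedModule). unfold scal; simpl; unfold mult; simpl. ring. }
    rewrite Hz in H. apply H.
    + intros; apply cont_hg; lra.
    + intros; apply continuous_const.
    + intros; apply hg_pos.
Qed.

Lemma FFz : Filter Fz. Proof. unfold Fz; typeclasses eauto. Qed.
Lemma FFi : Filter Fi. Proof. unfold Fi; typeclasses eauto. Qed.
Lemma FL1 : Filter (at_left 1). Proof. typeclasses eauto. Qed.
#[local] Existing Instance FFz.
#[local] Existing Instance FFi.

Lemma gen_ext_pos (f g0 : R -> R) l : (forall x, 0 < x -> f x = g0 x) ->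
  is_RInt_gen f Fz Fi l -> is_RInt_gen g0 Fz Fi l.
Proof.
  intros He H. apply (is_RInt_gen_ext f g0 l); [|exact H].
  apply (Fz_Fi_ev (fun a b => forall x, Rmin a b < x < Rmax a b -> f x = g0 x) 1 1 Rlt_0_1).
  intros a b Ha Hb x Hx. apply He. rewrite Rmin_left in Hx; lra.
Qed.

Lemma hc_int g c G0 : 0 < g < 1 -> 0 < c -> is_RInt_gen (hg g) Fz Fi G0 ->
  is_RInt_gen (hc g c) Fz Fi (Rpower c (- g) * G0).
Proof.
  intros Hg Hc HG.
  assert (H1 : is_RInt_gen (fun y => (fun _ => c) y * hg g ((fun t => c * t) y)) Fz Fi G0).
  { apply (cov (hg g) (fun t => c * t) (fun _ => c) Fz Fi Fz Fi G0).
    - apply (Fz_Fi_ev (fun a b => forall x, Rmin a b <= x <= Rmax a b -> _) 1 1 Rlt_0_1).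
      intros a b Ha Hb x Hx. rewrite Rmin_left in Hx by lra.
      split; [apply cont_hg; nra|]. split; [|apply continuous_const].
      auto_derive. auto. ring.
    - apply fl_Fz_Fz. intros d Hd. exists (d / c). split. apply Rdiv_lt_0_compat; lra.
      intros t Ht. split. nra. destruct Ht as [Ht1 Ht2].
      apply (Rmult_lt_compat_l c) in Ht2; [|lra]. replace (c * (d / c)) with d in Ht2 by (field; lra). lra.
    - apply fl_Fi_Fi. intros M. exists (M / c). intros t Ht.
      apply (Rmult_lt_compat_l c) in Ht; [|lra]. replace (c * (M / c)) with M in Ht by (field; lra). lra.
    - exact HG. }
  apply (is_RInt_gen_scal _ (Rpower c (- g))) in H1.
  revert H1. apply gen_ext_pos.
  intros x Hx. unfold scal; simpl; unfold mult; simpl. unfold hg, hc.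
  rewrite <- Rpower_mult_distr by lra.
  assert (E : Rpower c (- g) * (c * (Rpower c (g - 1))) = 1).
  { rewrite <- (Rpower_1 c) at 2 by lra. rewrite <- !Rpower_plus.
    replace (- g + (1 + (g - 1))) with 0 by ring. apply Rpower_O; lra. }
  transitivity ((Rpower c (- g) * (c * (Rpower c (g - 1)))) * (Rpower x (g - 1) * exp (- (c * x)))).
  ring. rewrite E. ring.
Qed.

#[local] Existing Instance FFz.
#[local] Existing Instance FFi.

Definition pN g N t := sum_f_R0 (fun j => hc g (INR j + 1) t / INR (Factorial.fact j)) N.
Definition AN g G0 N := sum_f_R0 (fun j => Rpower (INR j + 1) (- g) * G0 / INR (Factorial.fact j)) N.
Definition eN N := exp 1 - sum_f_R0 (fun j => 1 ^ j / INR (Factorial.fact j)) N.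
Definition sg g j := Rpower (INR j + 1) (- g) / INR (Factorial.fact j).

Lemma gen_ext_all (f g0 : R -> R) l : (forall x, f x = g0 x) ->
  is_RInt_gen f Fz Fi l -> is_RInt_gen g0 Fz Fi l.
Proof. intros He. apply gen_ext_pos. intros; apply He. Qed.

Lemma gen_Rscal (f : R -> R) k l : is_RInt_gen f Fz Fi l ->
  is_RInt_gen (fun y => k * f y) Fz Fi (k * l).
Proof. intros H. exact (is_RInt_gen_scal f k l H). Qed.

Lemma gen_l (f : R -> R) (l l' : R) : is_RInt_gen f Fz Fi l -> l = l' -> is_RInt_gen f Fz Fi l'.
Proof. intros H ->. exact H. Qed.

Lemma gen_Rplus (f f2 : R -> R) l1 l2 : is_RInt_gen f Fz Fi l1 -> is_RInt_gen f2 Fz Fi l2 ->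
  is_RInt_gen (fun y => f y + f2 y) Fz Fi (l1 + l2).
Proof. intros H1 H2. exact (is_RInt_gen_plus f f2 l1 l2 H1 H2). Qed.

Lemma term_int g G0 j : 0 < g < 1 -> is_RInt_gen (hg g) Fz Fi G0 ->
  is_RInt_gen (fun t => hc g (INR j + 1) t / INR (Factorial.fact j)) Fz Fi
    (Rpower (INR j + 1) (- g) * G0 / INR (Factorial.fact j)).
Proof.
  intros Hg HG.
  assert (H := hc_int g (INR j + 1) G0 Hg ltac:(generalize (pos_INR j); lra) HG).
  apply (gen_Rscal _ (/ INR (Factorial.fact j))) in H.
  eapply gen_l. eapply gen_ext_all; [|exact H].
  intros x. simpl. unfold Rdiv. ring. unfold Rdiv. ring.
Qed.

Lemma pN_int g G0 N : 0 < g < 1 -> is_RInt_gen (hg g) Fz Fi G0 ->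
  is_RInt_gen (pN g N) Fz Fi (AN g G0 N).
Proof.
  intros Hg HG. induction N as [|N IH].
  - unfold pN, AN. cbn [sum_f_R0]. apply term_int; assumption.
  - assert (H2 := gen_Rplus _ _ _ _ IH (term_int g G0 (S N) Hg HG)).
    unfold pN, AN. cbn [sum_f_R0]. exact H2.
Qed.

Lemma tail_series (a : nat -> R) (l : R) N : is_series a l -> is_series (fun k => a (S N + k)%nat) (l - sum_f_R0 a N).
Proof.
  intros H. apply is_series_incr_n. lia.
  match goal with |- is_series _ ?L => replace L with l; [exact H|] end.
  rewrite sum_n_Reals. simpl. unfold plus; simpl. ring.
Qed.

Lemma tail_bound y N : 0 <= y <= 1 ->
  0 <= exp y - sum_f_R0 (fun j => y ^ j / INR (Factorial.fact j)) N <= eN N.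
Proof.
  intros Hy. split.
  - generalize (exp_ge_taylor y N (proj1 Hy)). lra.
  - unfold eN.
    apply (series_le_lim _ _ _ _ (tail_series _ _ N (exp_series y)) (tail_series _ _ N (exp_series 1))).
    intros n. unfold Rdiv. apply Rmult_le_compat_r.
    left; apply Rinv_0_lt_compat, INR_fact_lt_0.
    apply pow_incr. exact Hy.
Qed.

Lemma exp_mul_nat n x : exp (INR n * x) = exp x ^ n.
Proof.
  induction n as [|n IH]. simpl. rewrite Rmult_0_l. apply exp_0.
  rewrite S_INR. replace ((INR n + 1) * x) with (INR n * x + x) by ring.
  rewrite exp_plus, IH. simpl. ring.
Qed.

Lemma pN_eq g N t : pN g N t = hg g t * sum_f_R0 (fun j => exp (- t) ^ j / INR (Factorial.fact j)) N.
Proof.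
  assert (Ht : forall j, hc g (INR j + 1) t / INR (Factorial.fact j) = hg g t * (exp (- t) ^ j / INR (Factorial.fact j))).
  { intros j. unfold hc, hg. replace (- ((INR j + 1) * t)) with (INR j * (- t) + - t) by ring.
    rewrite exp_plus, exp_mul_nat. field. apply INR_fact_neq_0. }
  unfold pN. induction N as [|N IH]. cbn [sum_f_R0]. apply Ht.
  cbn [sum_f_R0]. rewrite IH, Ht. ring.
Qed.

Lemma fg_pN_bound g N t : 0 < t -> Rabs (fg g t - pN g N t) <= eN N * hg g t.
Proof.
  intros Ht. rewrite pN_eq.
  assert (Hy : 0 <= exp (- t) <= 1).
  { split. left; apply exp_pos. apply Rle_trans with (exp 0); [left; apply exp_increasing; lra | rewrite exp_0; lra]. }
  destruct (tail_bound _ N Hy) as [H1 H2].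
  replace (fg g t - hg g t * sum_f_R0 (fun j => exp (- t) ^ j / INR (Factorial.fact j)) N)
    with (hg g t * (exp (exp (- t)) - sum_f_R0 (fun j => exp (- t) ^ j / INR (Factorial.fact j)) N))
    by (unfold fg, hg; ring).
  assert (Hh := hg_pos g t).
  rewrite Rabs_pos_eq by nra. rewrite Rmult_comm. apply Rmult_le_compat_r; lra.
Qed.

Lemma ser_lim a l : is_series a l -> is_lim_seq (fun N => sum_f_R0 a N) l.
Proof. intros H. apply is_lim_seq_ext with (sum_n a). intros; apply sum_n_Reals. exact H. Qed.

Lemma sg_series g : 0 < g < 1 -> is_series (sg g) (Series (sg g)).
Proof.
  intros Hg. apply Series_correct.
  apply (@ex_series_le R_AbsRing R_CompleteNormedModule _ (fun j => 1 ^ j / INR (Factorial.fact j))).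
  - intros n. change (norm (sg g n)) with (Rabs (sg g n)). unfold sg.
    assert (H1 : 1 <= INR n + 1) by (generalize (pos_INR n); lra).
    assert (Hp : 0 < Rpower (INR n + 1) (- g)) by apply rp_pos.
    assert (Hq : Rpower (INR n + 1) (- g) <= 1).
    { rewrite Rpower_Ropp.
      assert (Hr : 1 <= Rpower (INR n + 1) g) by (apply Rle_trans with (Rpower (INR n + 1) 0); [rewrite Rpower_O; lra | apply Rle_Rpower; lra]).
      apply Rle_trans with (/ 1). apply Rinv_le_contravar; lra. rewrite Rinv_1; lra. }
    rewrite Rabs_pos_eq. rewrite pow1. unfold Rdiv. apply Rmult_le_compat_r.
    left; apply Rinv_0_lt_compat, INR_fact_lt_0. exact Hq.
    unfold Rdiv. apply Rmult_le_pos. lra. left; apply Rinv_0_lt_compat, INR_fact_lt_0.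
  - exists (exp 1). apply exp_series.
Qed.

Lemma fg_int g G0 : 0 < g < 1 -> is_RInt_gen (hg g) Fz Fi G0 ->
  is_RInt_gen (fg g) Fz Fi (G0 * Series (sg g)).
Proof.
  intros Hg HG.
  apply (sq_gen (fg g) (hg g) (pN g) (AN g G0) eN G0).
  - intros; apply cont_fg; assumption.
  - exact HG.
  - intros N. apply pN_int; assumption.
  - intros N x Hx. apply fg_pN_bound, Hx.
  - intros N. assert (H : 0 <= 1 <= 1) by lra. destruct (tail_bound 1 N H). unfold eN. lra.
  - apply is_lim_seq_ext with (fun N => G0 * sum_f_R0 (sg g) N).
    + intros N. unfold AN, sg. induction N as [|N IH]. cbn [sum_f_R0]. field. apply INR_fact_neq_0.
      cbn [sum_f_R0]. rewrite <- IH. field. apply INR_fact_neq_0.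
    + apply (is_lim_seq_scal_l _ G0 (Series (sg g))). apply ser_lim, sg_series, Hg.
  - replace 0 with (exp 1 - exp 1) by ring. unfold eN.
    apply is_lim_seq_minus'. apply is_lim_seq_const. apply ser_lim, exp_series.
Qed.

#[local] Existing Instance FFz.
#[local] Existing Instance FFi.
#[local] Existing Instance FL1.

Lemma ln_neg x : 0 < x < 1 -> ln x < 0.
Proof. intros Hx. rewrite <- ln_1. apply ln_increasing; lra. Qed.

Lemma fg_at g y : 0 < y < 1 -> - (- / y * fg g (- ln y)) = w g y.
Proof.
  intros Hy. unfold fg, w. rewrite Ropp_involutive, exp_ln by lra.
  replace (g - 1) with (- (1 - g)) by ring. rewrite Rpower_Ropp.
  field. split. apply Rgt_not_eq, rp_pos. lra.
Qed.

Lemma w_int g G0 : 0 < g < 1 -> is_RInt_gen (hg g) Fz Fi G0 ->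
  is_RInt_gen (w g) (at_right 0) (at_left 1) (G0 * Series (sg g)).
Proof.
  intros Hg HG.
  set (L := G0 * Series (sg g)).
  assert (HF : is_RInt_gen (fg g) Fz Fi L) by (apply fg_int; assumption).
  assert (Hs := is_RInt_gen_swap (fg g) L HF).
  assert (Hc : is_RInt_gen (fun y => (fun x => - / x) y * fg g ((fun x => - ln x) y)) Fz (at_left 1) (opp L)).
  { apply (cov (fg g) (fun x => - ln x) (fun x => - / x) Fz (at_left 1) Fi Fz (opp L)).
    - apply (Filter_prod _ _ _ (fun a => 0 < a < 1) (fun b => 0 < b < 1)).
      + apply (Fz_intro _ 1 Rlt_0_1). auto.
      + apply (L1_intro _ 1 Rlt_0_1). intros; lra.
      + intros a b Ha Hb x Hx. simpl in Hx.
        assert (Hx0 : 0 < x) by (generalize (Rmin_glb_lt a b 0 (proj1 Ha) (proj1 Hb)); lra).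
        assert (Hx1 : x < 1) by (generalize (Rmax_lub_lt a b 1 (proj2 Ha) (proj2 Hb)); lra).
        split; [|split].
        * apply cont_fg. generalize (ln_neg x (conj Hx0 Hx1)); lra.
        * auto_derive. lra. field. lra.
        * apply (@ex_derive_continuous R_AbsRing R_NormedModule). auto_derive. lra.
    - apply fl_Fz_Fi. intros M. exists (exp (- M)). split. apply exp_pos.
      intros t Ht. assert (ln t < - M).
      { rewrite <- (ln_exp (- M)). apply ln_increasing; lra. }
      lra.
    - apply fl_L1_Fz. intros d Hd. exists (1 - exp (- d)).
      assert (exp (- d) < 1) by (rewrite <- exp_0; apply exp_increasing; lra).
      split. lra. intros t Ht.
      assert (Hep : 0 < exp (- d)) by apply exp_pos.
      assert (- d < ln t).
      { rewrite <- (ln_exp (- d)). apply ln_increasing; lra. }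
      assert (ln t < 0) by (apply ln_neg; lra). lra.
    - exact Hs. }
  apply is_RInt_gen_opp in Hc.
  rewrite opp_opp in Hc.
  revert Hc. apply is_RInt_gen_ext.
  apply (Filter_prod _ _ _ (fun a => 0 < a < 1) (fun b => 0 < b < 1)).
  + apply (Fz_intro _ 1 Rlt_0_1). auto.
  + apply (L1_intro _ 1 Rlt_0_1). intros; lra.
  + intros a b Ha Hb x Hx. simpl in Hx.
    assert (Hx0 : 0 < x) by (generalize (Rmin_glb_lt a b 0 (proj1 Ha) (proj1 Hb)); lra).
    assert (Hx1 : x < 1) by (generalize (Rmax_lub_lt a b 1 (proj2 Ha) (proj2 Hb)); lra).
    apply fg_at. lra.
Qed.

Lemma ratio1_eq g : 0 < g < 1 ->
  pois_expect (INR 1) (phi g) / phi g (INR 1) = exp (-1) * Series (sg g).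
Proof.
  intros Hg. change (INR 1) with 1. rewrite phi_1. unfold Rdiv. rewrite Rinv_1, Rmult_1_r.
  rewrite pois_eq. rewrite Series_incr_1 by (apply pois_ex; lra).
  replace (pt 1 0 * phi g (INR 0)) with 0.
  2:{ replace (phi g (INR 0)) with 0. ring. unfold phi. simpl. destruct (Rle_dec 0 0); lra. }
  rewrite Rplus_0_l. rewrite <- Series_scal_l. apply Series_ext. intros k.
  rewrite pt1. rewrite phi_split by (apply lt_0_INR; lia).
  unfold sg. rewrite S_INR.
  change (Factorial.fact (S k)) with (S k * Factorial.fact k)%nat. rewrite mult_INR, S_INR.
  field. split. apply INR_fact_neq_0. generalize (pos_INR k); lra.
Qed.

Theorem mainTheorem12 (g : R) (hg0 : 0 < g) (hg1 : g < 1) :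
  alpha (phi g) =
  Finite (/ (exp 1 * Gamma g) *
          RInt_gen (fun x => exp x / Rpower (- ln x) (1 - g))
                   (at_right 0) (at_left 1)).
Proof.
  assert (Hg : 0 < g < 1) by lra.
  destruct (gamma_ex g Hg) as [G0 [HG0 Hpos]].
  assert (EG : Gamma g = G0).
  { unfold Gamma. apply (is_RInt_gen_unique (Fa := at_right 0) (Fb := Rbar_locally p_infty)).
    exact HG0. }
  assert (EI : RInt_gen (fun x => exp x / Rpower (- ln x) (1 - g)) (at_right 0) (at_left 1) = G0 * Series (sg g)).
  { apply (is_RInt_gen_unique (Fa := at_right 0) (Fb := at_left 1)).
    exact (w_int g G0 Hg HG0). }
  rewrite EG, EI.
  set (r1 := pois_expect (INR 1) (phi g) / phi g (INR 1)).
  assert (Er1 : r1 = / (exp 1 * G0) * (G0 * Series (sg g))).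
  { unfold r1. rewrite ratio1_eq by exact Hg.
    replace (-1) with (- (1)) by ring. rewrite exp_Ropp. field.
    split; apply Rgt_not_eq; [lra|apply exp_pos]. }
  rewrite <- Er1. unfold alpha. apply is_glb_Rbar_unique. split.
  - intros x [n [Hn ->]]. simpl.
    destruct (Nat.eq_dec n 1) as [->|Hn1].
    + apply Rle_refl.
    + apply Rle_trans with (Rpower (2/3) g).
      * apply Rle_trans with (exp (-1) * (1 + Rpower 2 (- g)) + Rpower 3 (- g) * (1 - 2 * exp (-1))).
        apply ratio1_upper; exact Hg. apply key_ineq; exact Hg.
      * apply ratio_lower; [lia|exact Hg].
  - intros b Hb. apply Hb. exists 1%nat. split. lia. reflexivity.
Qed.
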